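(* Let $(X,\mathcal{B},\mu)$ and $(Y,\mathcal{F},\nu)$ be measure spaces with non-trivial $\sigma$-finite measures $\mu,\nu$, and let $T\subset \mathbb{R}_+=[0,\infty)$. Let $f:X\times T\to\mathbb{R}$ and $u:Y\times T\to\mathbb{R}$ be functions such that for every $t\in T$ the functions $f(\cdot,t)$ and $u(\cdot,t)$ are measurable, and (for instance) $u=Q[f]$ for some (not necessarily linear) operator $Q$. For $t\in T$ write $$\|f\|_q(t)=\Big(\int_X |f(x,t)|^q\,\mu(dx)\Big)^{1/q},\qquad \|u\|_p(t)=\Big(\int_Y |u(y,t)|^p\,\nu(dy)\Big)^{1/p}.$$ Let $1\le a<b\le\infty$ and $1\le c<d\le\infty$, and suppose there is a constant $C=C(a,b,c,d)\ge 0$ such that $$\|u\|_p(t)\le C\, t^{1/p-1/q}\,\|f\|_q(t)\qquad\text{for all } t\in T,\ q\in(a,b),\ p\in(c,d).$$ Let $\psi\in G\Psi(a,b)$ and $\chi\in G\Psi(c,d)$, and suppose that for every $t\in T$, $\|f(\cdot,t)\|_{G\psi}<\infty$ (Grand Lebesgue norm over $(X,\mu)$) and $\|u(\cdot,t)\|_{G\chi}<\infty$ (Grand Lebesgue norm over $(Y,\nu)$). Then for every $t\in T$, $$\phi[G\psi](t)\cdot \|u(\cdot,t)\|_{G\chi}\le C(a,b,c,d)\,\phi[G\chi](t)\cdot\|f(\cdot,t)\|_{G\psi},$$ equivalently (when the fundamental functions are positive and finite) $$\frac{\|u(\cdot,t)\|_{G\chi}}{\phi[G\chi](t)}\le C(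a,b,c,d)\,\frac{\|f(\cdot,t)\|_{G\psi}}{\phi[G\psi](t)}.$$
   Context: For $1\le a<b\le\infty$, $G\Psi(a,b)$ denotes the set of strictly positive measurable functions $\psi:(a,b)\to(0,\infty)$ (not necessarily finite at the endpoints) with $\inf_{p\in(a,b)}\psi(p)>0$; $(a,b)$ is called the domain $\mathrm{Dom}(\psi)$. For a measure space $(\Omega,\mu)$ and $\psi\in G\Psi(a,b)$, the Grand Lebesgue Space $G\psi$ consists of measurable $g:\Omega\to\mathbb{R}$ with finite norm $\|g\|_{G\psi}=\sup_{p\in(a,b)}\|g\|_p/\psi(p)$, where $\|g\|_p=(\int_\Omega|g|^p\,d\mu)^{1/p}$. The fundamental function of $G\psi$ is $\phi[G\psi](\delta)=\sup_{p\in\mathrm{Dom}(\psi)}\delta^{1/p}/\psi(p)$ for $\delta\ge0$. (The paper denotes the generating function on $(c,d)$ by $\nu$, the same letter as the measure on $Y$; here it is renamed $\chi$.) *)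

(* Defs.v *)
From HB Require Import structures.
From mathcomp Require Import all_boot all_order all_algebra.
From mathcomp Require Import all_classical all_reals all_analysis.
Set Implicit Arguments. Unset Strict Implicit. Unset Printing Implicit Defensive.
Import Order.TTheory GRing.Theory Num.Theory.
Local Open Scope classical_set_scope.
Local Open Scope ring_scope.

Definition dom_ab {R : realType} (a : R) (b : \bar R) : set R :=
  [set p : R | (a%:E < p%:E)%E /\ (p%:E < b)%E].

(* G Psi(a,b): strictly positive measurable functions on (a,b) with
   positive infimum over (a,b).  psi is given as a total function R -> R;
   only its values on (a,b) matter. *)
Definition GPsi {R : realType} (a : R) (b : \bar R) (psi : R -> R) : Prop :=
  measurable_fun (dom_ab a b) psi /\
  (forall p, dom_ab a b p -> 0 < psi p) /\
  (exists2 eps : R, 0 < eps & forall p, dom_ab a b p -> eps <= psi p).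

Definition GLnorm {d} {X : measurableType d} {R : realType}
  (mu : {measure set X -> \bar R}) (a : R) (b : \bar R) (psi : R -> R)
  (g : X -> R) : \bar R :=
  ereal_sup [set ('N[mu]_(p%:E)[EFin \o g] * (psi p)^-1%:E)%E
            | p in dom_ab a b].

Definition fundfun {R : realType} (a : R) (b : \bar R) (psi : R -> R)
  (delta : R) : \bar R :=
  ereal_sup [set ((delta `^ p^-1) / psi p)%:E | p in dom_ab a b].

(* Main.v *)
Require Import Defs.
From HB Require Import structures.
From mathcomp Require Import all_boot all_order all_algebra.
From mathcomp Require Import all_classical all_reals all_analysis.
From mathcomp Require Import ring lra.
Import Order.TTheory GRing.Theory Num.Theory.
Local Open Scope classical_set_scope.
Local Open Scope ring_scope.

Lemma sup_mul_le (R : realType) (S1 S2 : set (\bar R)) (K : \bar R) :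
  S1 !=set0 -> (forall x, S1 x -> (0 <= x)%E) ->
  (forall y, S2 y -> (0 <= y)%E /\ (y < +oo)%E) ->
  (ereal_sup S1 < +oo)%E -> (0 <= K)%E ->
  (forall x y, S1 x -> S2 y -> (x * y <= K)%E) ->
  (ereal_sup S1 * ereal_sup S2 <= K)%E.
Proof.
move=> [x0 Sx0] S1ge0 S2fin supfin K0 H.
have s0 : (0 <= ereal_sup S1)%E.
  by apply: le_trans (S1ge0 _ Sx0) _; apply: ereal_sup_ubound.
have [r rE] : exists r : R, ereal_sup S1 = r%:E.
  by exists (fine (ereal_sup S1)); rewrite fineK // ge0_fin_numE.
rewrite rE; have [r0|rgt0|r0] := ltgtP r 0.
- exfalso; move: s0; rewrite rE lee_fin; lra.
- rewrite -ereal_sup_pZl //; apply: ge_ereal_sup => _ [y S2y <-].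
  have [y0 yfin] := S2fin _ S2y.
  have [s sE] : exists s : R, y = s%:E.
    by exists (fine y); rewrite fineK // ge0_fin_numE.
  rewrite sE -rE muleC -ereal_supZl; last by rewrite -lee_fin -sE.
    apply: ge_ereal_sup => _ [x S1x <-]; rewrite -sE muleC; exact: H.
  by apply/set0P; exists x0.
- by rewrite r0 mul0e.
Qed.

Lemma dom_ne (R : realType) (a : R) (b : \bar R) : (a%:E < b)%E -> exists p, dom_ab a b p.
Proof.
case: b => [r| |] ab.
- exists ((a + r) / 2); rewrite /dom_ab /= !lte_fin; move: ab; rewrite lte_fin; split; lra.
- by exists (a + 1); rewrite /dom_ab /= lte_fin ltey; split => //; lra.
- by move: ab; rewrite ltNge leNye.
Qed.

Lemma powR_le1t (R : realType) (t r : R) : 0 <= t -> 0 <= r <= 1 -> t `^ r <= 1 + t.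
Proof.
move=> t0 /andP[r0 r1].
have [t1|t1] := leP t 1.
- apply: (@le_trans _ _ 1); last lra.
  have [->|tp] := eqVneq t 0.
    by rewrite /powR eqxx; case: (r == 0).
  rewrite -(powRr0 t); apply: ger_powR => //.
  by rewrite t1 andbT lt0r tp.
- apply: le_trans (ler1_powR _ r1) _; lra.
Qed.

Lemma key_pow (R : realType) (t p q : R) : 0 <= t -> q^-1 != 0 ->
  t `^ q^-1 * t `^ (p^-1 - q^-1) <= t `^ p^-1.
Proof.
move=> t0 qn0; have [->|tp] := eqVneq t 0.
  by rewrite powR0 // mul0r powR_ge0.
by rewrite -powRD ?tp ?implybT // addrC subrK.
Qed.

Theorem proposition2p1 (R : realType)
  (dX : measure_display) (X : measurableType dX) (mu : {measure set X -> \bar R})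
  (dY : measure_display) (Y : measurableType dY) (nu : {measure set Y -> \bar R})
  (mu_sf : sigma_finite [set: X] mu) (nu_sf : sigma_finite [set: Y] nu)
  (mu_nt : (0 < mu [set: X])%E) (nu_nt : (0 < nu [set: Y])%E)
  (T : set R) (T_pos : T `<=` [set t | 0 <= t])
  (f : X -> R -> R) (u : Y -> R -> R)
  (f_meas : forall t, T t -> measurable_fun [set: X] (fun x => f x t))
  (u_meas : forall t, T t -> measurable_fun [set: Y] (fun y => u y t))
  (a : R) (b : \bar R) (c : R) (d : \bar R)
  (a1 : 1 <= a) (ab : (a%:E < b)%E) (c1 : 1 <= c) (cd : (c%:E < d)%E)
  (C : R) (C0 : 0 <= C)
  (hyp : forall t q p, T t -> dom_ab a b q -> dom_ab c d p ->
     ('N[nu]_(p%:E)[EFin \o (fun y => u y t)]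
       <= (C * t `^ (p^-1 - q^-1))%:E * 'N[mu]_(q%:E)[EFin \o (fun x => f x t)])%E)
  (psi chi : R -> R) (psiG : GPsi a b psi) (chiG : GPsi c d chi)
  (f_fin : forall t, T t -> (GLnorm mu a b psi (fun x => f x t) < +oo)%E)
  (u_fin : forall t, T t -> (GLnorm nu c d chi (fun y => u y t) < +oo)%E) :
  forall t, T t ->
    (fundfun a b psi t * GLnorm nu c d chi (fun y => u y t)
      <= C%:E * fundfun c d chi t * GLnorm mu a b psi (fun x => f x t))%E.
Proof.
move=> t Tt; have t0 : 0 <= t := T_pos _ Tt.
have [_ [psip [eps eps0 epsle]]] := psiG.
have [_ [chip _]] := chiG.
have [q0 Dq0] := dom_ne _ _ _ ab.
have [p0 Dp0] := dom_ne _ _ _ cd.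
have qgt1 : forall q, dom_ab a b q -> 1 < q.
  by move=> q [+ _]; rewrite lte_fin; lra.
have pgt1 : forall p, dom_ab c d p -> 1 < p.
  by move=> p [+ _]; rewrite lte_fin; lra.
have Phichi0 : (0 <= fundfun c d chi t)%E.
  apply: le_trans (ereal_sup_ubound _) => /=; last by exists p0.
  by rewrite lee_fin divr_ge0 ?powR_ge0 // ltW // chip.
have Gf0 : (0 <= GLnorm mu a b psi (fun x => f x t))%E.
  apply: le_trans (ereal_sup_ubound _) => /=; last by exists q0.
  by rewrite mule_ge0 ?Lnorm_ge0 // lee_fin invr_ge0 ltW // psip.
apply: sup_mul_le.
- by exists ((t `^ q0^-1 / psi q0)%:E); exists q0.
- move=> _ [q Dq <-]; by rewrite lee_fin divr_ge0 ?powR_ge0 // ltW // psip.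
- move=> _ [p Dp <-]; split.
    by rewrite mule_ge0 ?Lnorm_ge0 // lee_fin invr_ge0 ltW // chip.
  apply: le_lt_trans (u_fin t Tt); apply: ereal_sup_ubound; by exists p.
- apply: (@le_lt_trans _ _ ((1 + t) / eps)%:E); last exact: ltry.
  apply: ge_ereal_sup => _ [q Dq <-]; rewrite lee_fin.
  have q1 := qgt1 q Dq.
  have psq := psip q Dq.
  apply: ler_pM.
  + exact: powR_ge0.
  + by rewrite invr_ge0 ltW.
  + apply: powR_le1t => //; apply/andP; split; [rewrite invr_ge0; lra | rewrite invf_le1; lra].
  + by rewrite (@lef_pV2 _ (psi q) eps) ?posrE ?epsle.
- by rewrite mule_ge0 // mule_ge0 // lee_fin.
- move=> _ _ [q Dq <-] [p Dp <-].
  have h := hyp t q p Tt Dq Dp.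
  set Nu := Lnorm nu p%:E _ in h *.
  set Nf := Lnorm mu q%:E _ in h *.
  have Nf0 : (0 <= Nf)%E by apply: Lnorm_ge0.
  have Nu0 : (0 <= Nu)%E by apply: Lnorm_ge0.
  have psq := psip q Dq; have chp := chip p Dp.
  apply: (@le_trans _ _ ((C * (t `^ p^-1 / chi p))%:E * (Nf * (psi q)^-1%:E))%E).
    have -> : ((t `^ q^-1 / psi q)%:E * (Nu * (chi p)^-1%:E) =
        ((t `^ q^-1 / psi q) * (chi p)^-1)%:E * Nu)%E.
      by rewrite muleCA muleC -EFinM.
    have -> : ((C * (t `^ p^-1 / chi p))%:E * (Nf * (psi q)^-1%:E) =
        ((C * (t `^ p^-1 / chi p)) * (psi q)^-1)%:E * Nf)%E.
      by rewrite muleCA muleC -EFinM.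
    apply: le_trans (lee_wpmul2l _ h) _.
      by rewrite lee_fin !mulr_ge0 ?powR_ge0 ?invr_ge0 ?ltW.
    rewrite muleA -EFinM; apply: lee_wpmul2r => //; rewrite lee_fin.
    have q1 := qgt1 q Dq.
    have k := @key_pow R t p q t0 (invr_neq0 (lt0r_neq0 (lt_trans ltr01 q1))).
    have -> : t `^ q^-1 / psi q / chi p * (C * t `^ (p^-1 - q^-1)) =
      (C / psi q / chi p) * (t `^ q^-1 * t `^ (p^-1 - q^-1)) by ring.
    have -> : C * (t `^ p^-1 / chi p) / psi q = (C / psi q / chi p) * t `^ p^-1 by ring.
    by apply: ler_wpM2l k; rewrite !divr_ge0 // ltW.
  rewrite EFinM; apply: lee_pmul => //.
  + by rewrite -EFinM lee_fin mulr_ge0 // divr_ge0 ?powR_ge0 // ltW.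
  + by rewrite mule_ge0 // lee_fin invr_ge0 ltW.
  + apply: lee_wpmul2l; first by rewrite lee_fin.
    by apply: ereal_sup_ubound; exists p.
  + by apply: ereal_sup_ubound; exists q.
Qed.
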